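(* Let $G$ be a transitive permutation group on a finite set $\Omega$ and let $k$ be an integer with $k>1$. Then $G$ is imprimitive with a block of imprimitivity of size at least $k$ if and only if there exists a map $f:\Omega\to\Omega$ with kernel type $(k,1,1,\ldots,1)$ such that $G$ does not synchronize $f$.
   Context: For a permutation group $G$ on $\Omega$ and a map $f:\Omega\to\Omega$ which is not a permutation, $G$ synchronizes $f$ if the semigroup $\langle G,f\rangle$ generated by $G$ and $f$ contains a constant map. The kernel of $f$ is the partition of $\Omega$ into the nonempty inverse images $\{x f^{-1}\}$ of points $x$ in the image of $f$; the kernel type of $f$ is the partition of $n=|\Omega|$ given by the sizes of the parts of the kernel. Thus kernel type $(k,1,\ldots,1)$ means exactly one kernel class has size $k$ and all others are singletons. A block of imprimitivity is a block of a nontrivial $G$-invariant partition of $\Omega$ (one which is neither the partition into singletons nor the partition with one part). *)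

(* Defs.v *)
From mathcomp Require Import all_boot all_fingroup.
Set Implicit Arguments. Unset Strict Implicit. Unset Printing Implicit Defensive.

Section Defs.
Variable T : finType.

Inductive in_sgroup (G : {group {perm T}}) (f : T -> T) : (T -> T) -> Prop :=
| sg_perm (g : {perm T}) : g \in G -> in_sgroup G f (fun x => g x)
| sg_map : in_sgroup G f f
| sg_comp h1 h2 : in_sgroup G f h1 -> in_sgroup G f h2 ->
    in_sgroup G f (fun x => h2 (h1 x)).

Definition synchronizes (G : {group {perm T}}) (f : T -> T) : Prop :=
  exists h, in_sgroup G f h /\ exists c : T, forall x, h x = c.

Definition kernel (f : T -> T) : {set {set T}} :=
  [set [set y | f y == f x] | x : T].

Definition kernel_type_k1 (f : T -> T) (k : nat) : Prop :=
  exists2 A, A \in kernel f &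
    #|A| = k /\ (forall B, B \in kernel f -> B != A -> #|B| = 1%N).

Definition G_invariant_partition (G : {group {perm T}}) (P : {set {set T}}) :=
  partition P [set: T] /\
  forall g, g \in G -> forall B, B \in P -> [set g x | x in B] \in P.

Definition nontrivial_partition (P : {set {set T}}) :=
  P != [set [set x] | x : T] /\ P != [set [set: T]].

Definition imprimitive_with_block_ge (G : {group {perm T}}) (k : nat) :=
  exists P, [/\ G_invariant_partition G P, nontrivial_partition P &
    exists2 B, B \in P & k <= #|B|].

End Defs.

(* Main.v *)
Require Import Defs.
From mathcomp Require Import all_boot all_fingroup.
From Stdlib Require Import ClassicalEpsilon.
Set Implicit Arguments. Unset Strict Implicit. Unset Printing Implicit Defensive.

Definition pb (P : Prop) : bool := if excluded_middle_informative P then true else false.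
Lemma pbP P : reflect P (pb P).
Proof. rewrite /pb; case: excluded_middle_informative => H; by constructor. Qed.

Section Back.
Variables (T : finType) (G : {group {perm T}}) (f : T -> T).
Definition coll x y := exists s, in_sgroup G f s /\ s x = s y.

Lemma coll_refl x : coll x x. Proof. exists f; split => //; exact: sg_map. Qed.

Lemma coll_map s x y : in_sgroup G f s -> coll (s x) (s y) -> coll x y.
Proof.
move=> Ss [t [St e]]; exists (fun z => t (s z)); split => //.
exact: (sg_comp Ss St).
Qed.

Lemma coll_perm g x y : g \in G -> coll (g x) (g y) -> coll x y.
Proof. move=> gG; apply: coll_map; exact: sg_perm. Qed.

Lemma coll_permE g x y : g \in G -> coll (g x) (g y) <-> coll x y.
Proof.
move=> gG; split; first exact: coll_perm.
move=> H; apply: (@coll_perm (g^-1)%g); first by rewrite groupV.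
by rewrite !permK.
Qed.

Definition N x := [set y | pb (~ coll x y)].

Lemma N_perm g x : g \in G -> N (g x) = [set g y | y in N x].
Proof.
move=> gG; apply/setP => z; rewrite -(permKV g z) mem_imset; last exact: perm_inj.
rewrite !inE; apply/pbP/pbP => H C; apply: H; first by apply/coll_permE.
by apply/(coll_permE _ _ gG).
Qed.

Lemma card_N_perm g x : g \in G -> #|N (g x)| = #|N x|.
Proof. by move=> gG; rewrite N_perm // card_imset //; exact: perm_inj. Qed.

Lemma nsync_edge (x0 : T) : ~ synchronizes G f -> exists u v, ~ coll u v.
Proof.
move=> NS; apply: NNPP => H.
have all_coll : forall u v, coll u v.
  by move=> u v; apply: NNPP => C; apply: H; exists u, v.
apply: NS.
suff: forall n h, in_sgroup G f h -> #|[set h x | x in T]| <= n -> synchronizes G f.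
  by move/(_ _ f (sg_map _ _) (leqnn _)).
elim=> [|n IH] h Sh.
  rewrite leqn0 cards_eq0 => /eqP/setP/(_ (h x0)); by rewrite inE imset_f.
move=> Hc; case: (boolP [exists x, exists y, h x != h y]); last first.
  move/existsPn => Hn; exists h; split => //; exists (h x0) => x.
  by move: (Hn x) => /existsPn /(_ x0) /negPn /eqP.
case/existsP => x /existsP [y nxy].
have [s [Ss e]] := all_coll (h x) (h y).
apply: (IH (fun z => s (h z))); first exact: (sg_comp Sh Ss).
rewrite -ltnS; apply: leq_trans Hc.
set X := [set h z | z in T].
have hyX : h y \in X by rewrite imset_f.
rewrite (cardsD1 (h y) X) hyX add1n ltnS.
apply: leq_trans (leq_imset_card s _).
apply: subset_leq_card; apply/subsetP => w /imsetP [z _ ->].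
case: (eqVneq (h z) (h y)) => E.
    by rewrite E -e; apply/imsetP; exists (h x) => //; rewrite !inE nxy imset_f.
by apply/imsetP; exists (h z) => //; rewrite !inE E imset_f.
Qed.

End Back.

Lemma back_main (T : finType) (G : {group {perm T}}) (f : T -> T) (k : nat) :
  [transitive G, on [set: T] | 'P] -> 1 < k -> kernel_type_k1 f k ->
  ~ synchronizes G f -> imprimitive_with_block_ge G k.
Proof.
move=> Htr k1 [A /imsetP [x0 _ defA] [cardA Hother]] NS.
have inA y : (y \in A) = (f y == f x0) by rewrite defA inE.
have injout y z : y \notin A -> f z = f y -> z = y.
  move=> yA e.
  have Bk : [set w | f w == f y] \in kernel f by apply: imset_f.
  have : [set w | f w == f y] != A.
    by apply/eqP => E; move: yA; rewrite -E inE eqxx.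
  move/(Hother _ Bk)/eqP/cards1P => [w Ew].
  have : y \in [set w | f w == f y] by rewrite inE.
  have : z \in [set w | f w == f y] by rewrite inE e.
  by rewrite Ew !inE => /eqP -> /eqP ->.
have Ntrans x y : #|N G f x| = #|N G f y|.
  have [g gG ->] := atransP2 Htr (in_setT x) (in_setT y).
  by rewrite /= apermE card_N_perm.
have NA a1 a2 : a1 \in A -> a2 \in A -> N G f a2 \subset N G f a1.
  move=> a1A a2A.
  set U := N G f a1 :|: N G f a2.
  have UA y : y \in U -> y \notin A.
    rewrite !inE => H; apply/negP; rewrite inA => /eqP fy.
    case/orP: H => /pbP; apply; exists f; split; try exact: sg_map.
      by move: a1A; rewrite inA => /eqP ->.
    by move: a2A; rewrite inA => /eqP ->.
  have fU : f @: U \subset N G f (f a1).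
    apply/subsetP => w /imsetP [y yU ->]; rewrite inE; apply/pbP => C.
    move: yU; rewrite !inE => /orP [] /pbP; apply.
      by apply: (coll_map _ C); exact: sg_map.
    have e2 : f a2 = f a1.
      by move: a1A a2A; rewrite !inA => /eqP -> /eqP ->.
    rewrite -e2 in C; apply: (coll_map _ C); exact: sg_map.
  have cU : #|f @: U| = #|U|.
    apply: card_in_imset => y z yU zU e.
    by apply: injout (UA z zU) e.
  have : #|U| <= #|N G f a1|.
    by rewrite -cU -(Ntrans (f a1)) subset_leq_card.
  move=> le; have : N G f a1 == U by rewrite eqEcard subsetUl le.
  by move/eqP => ->; rewrite subsetUr.
have x0A : x0 \in A by rewrite inA.
have [a2 [a2A a2x0]] : exists a2, a2 \in A /\ a2 != x0.
  move: k1; rewrite -cardA => /card_gt1P [y [z [yA zA yz]]].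
  case: (eqVneq y x0) => [Ey|]; last by exists y.
  by exists z; split => //; rewrite -Ey eq_sym.
have [u [v nuv]] := nsync_edge x0 NS.
set cls := fun x => [set y in [set: T] | N G f x == N G f y].
set P := [set cls x | x in [set: T]].
have partP : partition P [set: T] := preim_partitionP (N G f) [set: T].
exists P; split.
- split => // g gG _ /imsetP [x _ ->].
  apply/imsetP; exists (g x) => //.
  apply/setP => z; rewrite -(permKV g z) mem_imset; last exact: perm_inj.
  rewrite !inE !(N_perm _ _ gG).
  by rewrite (inj_eq (imset_inj perm_inj)).
- split.
  + apply/eqP => E.
    have : cls x0 \in P by apply: imset_f.
    rewrite E => /imsetP [w _ Ew].
    have : x0 \in cls x0 by rewrite /cls !inE eqxx.
    have : a2 \in cls x0.
      by rewrite /cls !inE eqEsubset !NA.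
    rewrite Ew !inE => /eqP E1 /eqP E2.
    by rewrite E1 E2 eqxx in a2x0.
  + apply/eqP => E.
    have : cls u \in P by apply: imset_f.
    rewrite E inE => /eqP Eu.
    have : v \in cls u by rewrite Eu inE.
    rewrite !inE => /eqP Nuv.
    have : v \in N G f u by rewrite inE; apply/pbP.
    rewrite Nuv inE => /pbP; apply; exact: coll_refl.
- exists (cls x0); first by apply: imset_f.
  rewrite -cardA; apply: subset_leq_card; apply/subsetP => y yA.
  by rewrite /cls !inE eqEsubset !NA.
Qed.

Lemma fwd_main (T : finType) (G : {group {perm T}}) (k : nat) :
  1 < k -> imprimitive_with_block_ge G k ->
  exists f : T -> T, kernel_type_k1 f k /\ ~ synchronizes G f.
Proof.
move=> k1 [P [[partP inv] [_ nT] [B BP kB]]].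
have /and3P [/eqP covP trivP n0P] := partP.
set s := take k (enum B).
set A := [set x in s].
have cardA : #|A| = k.
  have u : uniq s by rewrite take_uniq // enum_uniq.
  rewrite cardsE; move/card_uniqP: u => ->.
  by rewrite size_takel // -cardE.
have AB : A \subset B.
  by apply/subsetP => x; rewrite inE => /mem_take; rewrite mem_enum.
have [a aA] : exists a, a \in A.
  by apply/set0Pn; rewrite -card_gt0 cardA; apply: ltnW.
set f := fun x => if x \in A then a else x.
have clsE x : [set y | f y == f x] = if x \in A then A else [set x].
  apply/setP => y; rewrite [y \in [set _ | _]]inE /f.
  case: (boolP (x \in A)) => xA; case: (boolP (y \in A)) => yA.
  - by rewrite eqxx.
  - by apply/negbTE; apply: contraNN yA => /eqP ->.
  - rewrite in_set1.
    have -> : (y == x) = false by apply/negbTE; apply: contraNN xA => /eqP <-.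
    by apply/negbTE; apply: contraNN xA => /eqP <-.
  - by rewrite in_set1.
exists f; split.
  exists A; first by apply/imsetP; exists a => //; rewrite clsE aA.
  split => // C /imsetP [x _ ->]; rewrite clsE; case: ifP => xA.
    by rewrite eqxx.
  by rewrite cards1.
have memP x : x \in cover P by rewrite covP inE.
have pblkP x : pblock P x \in P by apply: pblock_mem.
have pbg g x : g \in G -> pblock P (g x) = [set g y | y in pblock P x].
  move=> gG; apply: def_pblock => //; first exact: inv.
  by apply: imset_f; rewrite mem_pblock.
have pbf x : pblock P (f x) = pblock P x.
  rewrite /f; case: ifP => // xA.
  have aB : a \in B by apply: (subsetP AB).
  have xB : x \in B by apply: (subsetP AB).
  by rewrite (def_pblock trivP BP aB) (def_pblock trivP BP xB).
have Inv : forall h, in_sgroup G f h ->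
    (forall x y, pblock P x = pblock P y -> pblock P (h x) = pblock P (h y)) /\
    (forall x, exists y, pblock P (h y) = pblock P x).
  move=> h; elim => [g gG | | h1 h2 _ [I1 J1] _ [I2 J2]].
  - split; first by move=> x y E; rewrite !pbg // E.
    by move=> x; exists ((g^-1)%g x); rewrite permKV.
  - by split; [move=> x y E; rewrite !pbf | move=> x; exists x; rewrite pbf].
  - split; first by move=> x y E; apply: I2; apply: I1.
    move=> x; have [y2 E2] := J2 x; have [y1 E1] := J1 y2.
    by exists y1; rewrite -E2; apply: I2.
move=> [h [Sh [c Hc]]].
have [_ J] := Inv h Sh.
have allc x : pblock P c = pblock P x.
  by have [y <-] := J x; rewrite Hc.
move/negP: nT; apply; apply/eqP/setP => C; rewrite inE; apply/idP/eqP => [CP | ->].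
  have /set0Pn [x xC] : C != set0 by apply: contraNneq n0P => <-.
  rewrite -(def_pblock trivP CP xC) -(allc x).
  by apply/setP => y; rewrite inE (allc y) mem_pblock memP.
have -> : [set: T] = pblock P c.
  by apply/setP => y; rewrite inE (allc y) mem_pblock memP.
exact: pblkP.
Qed.

Theorem theorem2 (T : finType) (G : {group {perm T}}) (k : nat) :
  [transitive G, on [set: T] | 'P] -> 1 < k ->
  (imprimitive_with_block_ge G k <->
   exists f : T -> T, kernel_type_k1 f k /\ ~ synchronizes G f).
Proof.
move=> Htr k1; split; first exact: fwd_main.
by move=> [f [Hf NS]]; apply: (back_main Htr k1 Hf NS).
Qed.
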